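(* Let $T\colon X\to X$ be a piecewise invertible map (with respect to a regular open partition $\mathcal U$) on a compact Hausdorff space $X$. Then the map $T'\colon X'\to X'$ is a local homeomorphism.
   Context: Let $X$ be compact Hausdorff. A set $U$ is regular open if $U=\mathrm{int}(\overline U)$. A regular open partition of $X$ is a finite family of nonempty, pairwise disjoint regular open sets whose closures cover $X$. For regular open partitions $\mathcal V,\mathcal W$, $\mathcal V\vee\mathcal W=\{V\cap W\ne\emptyset: V\in\mathcal V,W\in\mathcal W\}$; $\mathcal V\preceq\mathcal W$ means each element of $\mathcal W$ lies in a (necessarily unique) element of $\mathcal V$. A continuous $T\colon X\to X$ is piecewise invertible w.r.t. a regular open partition $\mathcal U=\{U_i\}_{i\in I}$, $C_i:=\overline{U_i}$, if each restriction $T_i\colon C_i\to T(C_i)$ is a homeomorphism and $T(U_i)=\mathrm{int}(T(C_i))$. For a regular open partition $\mathcal V=\{V_j\}$, put $\mathcal T_i=\{T(U_i\cap V_j):U_i\cap V_j\neq\emptyset\}\cup\{X\setminus T(C_i)\}$ (omitting empty sets), $T(\mathcal V)=\bigvee_i\mathcal T_i$, and $T^{-1}(\mathcal V)=\{T_i^{-1}(O): i\in I,\ O\in\mathcal V\vee T(\mathcal U),\ O\subseteq T(U_i)\}$; these are regular open partitions, and $T^\beta,T^{-\alpha}$ denote iterates of these operations. Set $\mathcal U_{m,n}=\bigvee_{0\le\alpha\le m,0\le\beta\le n}T^{-\alpha}(T^\beta(\mathcal U))$; for $(m',n')\ge(m,n)$ componentwise, $\mathcal U_{m,n}\preceq\mathcal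 U_{m',n'}$. Let $\bar X=\varprojlim\mathcal U_{m,n}$ (inverse limit of finite discrete sets), whose elements are families $\mathbf U=(U_{m,n})$, $U_{m,n}\in\mathcal U_{m,n}$, compatible under inclusion. Let $X'=\{(x,(U_{m,n}))\in X\times\bar X: x\in\overline{U_{m,n}}\ \forall m,n\}$ with the subspace topology, $\bar T\colon\bar X\to\bar X$, $\bar T((U_{m,n}))=(V_{m,n})$ where $V_{m,n}$ is the unique element of $\mathcal U_{m,n}$ containing $T(U_{m+1,n})$, and $T'(x,\mathbf U)=(Tx,\bar T\mathbf U)$. *)

(* Defs.v *)
From HB Require Import structures.
From mathcomp Require Import all_boot all_order all_algebra.
From mathcomp Require Import all_classical all_reals all_analysis.
From Stdlib Require Import ClassicalEpsilon.
Set Implicit Arguments. Unset Strict Implicit. Unset Printing Implicit Defensive.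
Local Open Scope classical_set_scope.

Section Defs.
Variable X : topologicalType.

Definition regular_open (U : set X) : Prop := U = interior (closure U).

Definition regular_open_partition (P : set (set X)) : Prop :=
  [/\ finite_set P,
      (forall U, P U -> U !=set0 /\ regular_open U),
      (forall U V, P U -> P V -> U <> V -> U `&` V = set0) &
      (forall x : X, exists U, P U /\ closure U x)].

Definition pjoin (P Q : set (set X)) : set (set X) :=
  [set W | exists V U, [/\ P V, Q U, W = V `&` U & W !=set0]].

Definition prefines (P Q : set (set X)) : Prop :=
  forall W, Q W -> exists V, P V /\ W `<=` V.

Definition piecewise_invertible (T : X -> X) (PU : set (set X)) : Prop :=
  [/\ continuous T,
      regular_open_partition PU &
      forall U, PU U ->
        [/\ {in closure U &, injective T},
            (* T_i : C_i -> T(C_i) is open onto its image (hence a homeomorphism,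
               T being continuous and injective on C_i) *)
            (forall O, open O -> exists O', open O' /\
                 T @` (closure U `&` O) = T @` closure U `&` O') &
            T @` U = interior (T @` closure U)]].

Variables (T : X -> X) (PU : set (set X)).

Definition img_part (U : set X) (V : set (set X)) : set (set X) :=
  [set W | W !=set0 /\
     ((exists W0, V W0 /\ W = T @` (U `&` W0)) \/ W = ~` (T @` closure U))].

(* T(V) = \/_i T_i (n-ary join over the finite index set PU) *)
Definition Tpart (V : set (set X)) : set (set X) :=
  [set W | W !=set0 /\ exists f : set X -> set X,
      (forall U, PU U -> img_part U V (f U)) /\ W = \bigcap_(U in PU) f U].

Definition Tinv (V : set (set X)) : set (set X) :=
  [set W | exists U O, [/\ PU U, pjoin V (Tpart PU) O, O `<=` T @` U &
                          W = closure U `&` T @^-1` O]].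

(* U_{m,n} = \/_{0<=a<=m, 0<=b<=n} T^{-a}(T^b(PU)) *)
Definition Umn (m n : nat) : set (set X) :=
  [set W | W !=set0 /\ exists f : nat -> nat -> set X,
     (forall a b, (a <= m)%N -> (b <= n)%N -> iter a Tinv (iter b Tpart PU) (f a b))
     /\ W = \bigcap_(ab in [set ab : nat * nat | (ab.1 <= m)%N /\ (ab.2 <= n)%N])
                f ab.1 ab.2].

(* the inverse limit Xbar, as compatible families indexed by (m,n) *)
Definition Xbar : set (nat * nat -> set X) :=
  [set F | (forall m n, Umn m n (F (m, n))) /\
           (forall m n m' n', (m <= m')%N -> (n <= n')%N -> F (m', n') `<=` F (m, n))].

Definition Tbar (F : nat * nat -> set X) : nat * nat -> set X :=
  fun mn => epsilon (inhabits set0)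
     (fun V => Umn mn.1 mn.2 V /\ T @` F (mn.1.+1, mn.2) `<=` V).

Definition Xprime : set (X * (nat * nat -> set X)) :=
  [set p | Xbar p.2 /\ forall m n, closure (p.2 (m, n)) p.1].

Definition Tprime (p : X * (nat * nat -> set X)) : X * (nat * nat -> set X) :=
  (T p.1, Tbar p.2).

(* open sets of X' for the subspace topology of X x Xbar, Xbar carrying the
   inverse-limit (= product of discrete) topology: basic opens are
   O x {F | F_i = G_i for i in a finite list s} *)
Definition Xprime_open (W : set (X * (nat * nat -> set X))) : Prop :=
  W `<=` Xprime /\
  forall p, W p -> exists (O : set X) (s : seq (nat * nat)),
     [/\ open O, O p.1 &
         forall q, Xprime q -> O q.1 -> (forall i, i \in s -> q.2 i = p.2 i) -> W q].

End Defs.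

Definition local_homeomorphism {P : Type} (A : set P) (isopen : set P -> Prop)
  (f : P -> P) : Prop :=
  (forall p, A p -> A (f p)) /\
  forall p, A p -> exists W, [/\ isopen W, W p, isopen (f @` W) &
     {in W &, injective f}] /\ (
     (forall O, isopen O -> isopen (W `&` f @^-1` O)) /\
     (* its inverse f(W) -> W is continuous *)
     (forall O, isopen O -> O `<=` W -> isopen (f @` O))).

(* Main.v *)
Require Import Defs.
From HB Require Import structures.
From mathcomp Require Import all_boot all_order all_algebra.
From mathcomp Require Import all_classical all_reals all_analysis.
From Stdlib Require Import ClassicalEpsilon.
Local Open Scope classical_set_scope.

Section Main.
Variables (X : topologicalType) (T : X -> X) (PU : set (set X)).
Hypothesis hTc : continuous T.
Hypothesis hPd : forall U V, PU U -> PU V -> U <> V -> U `&` V = set0.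
Hypothesis hinj : forall U, PU U -> {in closure U &, injective T}.

Definition Dj (Q : set (set X)) := forall A B, Q A -> Q B ->
  (exists z, A z /\ B z) -> A = B.

Lemma Dj_PU : Dj PU.
Proof.
move=> A B hA hB [z [zA zB]]; case: (pselect (A = B)) => // hne.
have := hPd _ _ hA hB hne; move/seteqP => [h _].
by have := h z (conj zA zB).
Qed.

Lemma injU U a b : PU U -> closure U a -> closure U b -> T a = T b -> a = b.
Proof. by move=> hU ha hb; apply: (hinj _ hU); apply: mem_set. Qed.
Arguments injU [U a b].

Lemma Dj_Tpart Q : Dj Q -> Dj (Tpart T PU Q).
Proof.
move=> hQ A B [_ [f [hf ->]]] [_ [g [hg ->]]] [z [zA zB]].
have e : forall U, PU U -> f U = g U.
  move=> U hU; have zf := zA U hU; have zg := zB U hU.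
  have [_ [[W0 [hW0 ef]]|ef]] := hf U hU; have [_ [[W1 [hW1 eg]]|eg]] := hg U hU.
  - move: zf zg; rewrite ef eg => -[a [aU aW0] <-] [b [bU bW1] eab].
    have ab : b = a by apply: (injU hU) => //; apply: subset_closure.
    subst b; have -> // : W0 = W1 by apply: hQ => //; exists a.
  - move: zf zg; rewrite ef eg => -[a [aU _] <-] /= hn; exfalso; apply: hn.
    by exists a => //; apply: subset_closure.
  - move: zf zg; rewrite ef eg => /= hn [a [aU _] ea]; exfalso; apply: hn.
    by exists a => //; apply: subset_closure.
  - by rewrite ef eg.
by apply/seteqP; split=> y hy U hU; [rewrite -e | rewrite e] => //; apply: hy.
Qed.

Arguments Dj_Tpart [Q].
Lemma Dj_pjoin P Q : Dj P -> Dj Q -> Dj (pjoin P Q).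
Proof.
move=> hP hQ A B [V [U [hV hU -> _]]] [V' [U' [hV' hU' -> _]]] [z [[zV zU] [zV' zU']]].
have -> : V = V' by apply: hP => //; exists z.
have -> // : U = U' by apply: hQ => //; exists z.
Qed.

Arguments Dj_pjoin [P Q].
Lemma inTinv U Oa z : PU U -> Oa `<=` T @` U -> closure U z -> Oa (T z) -> U z.
Proof.
move=> hU hO hz hTz; have [a aU ea] := hO _ hTz.
have -> // : z = a by apply: (injU hU) => //; apply: subset_closure.
Qed.
Arguments inTinv [U Oa z].

Lemma Dj_Tinv Q : Dj Q -> Dj (Tinv T PU Q).
Proof.
move=> hQ A B [U [Oa [hU hO hOU ->]]] [U' [Ob [hU' hO' hOU' ->]]] [z [[zU zO] [zU' zO']]].
have zU1 := inTinv hU hOU zU zO; have zU2 := inTinv hU' hOU' zU' zO'.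
have e : U = U' by apply: Dj_PU => //; exists z.
subst U'; have -> // : Oa = Ob.
apply: (Dj_pjoin hQ (Dj_Tpart Dj_PU)) => //; by exists (T z).
Qed.

Definition fam a b := iter a (Tinv T PU) (iter b (Tpart T PU) PU).

Lemma Dj_fam a b : Dj (fam a b).
Proof.
rewrite /fam; elim: a => [|a IH] /=; last exact: Dj_Tinv.
elim: b => [|b IH] /=; [exact: Dj_PU | exact: Dj_Tpart].
Qed.


Lemma Umn_sub m n W a b : Umn T PU m n W -> (a <= m)%N -> (b <= n)%N ->
  exists E, fam a b E /\ W `<=` E.
Proof.
move=> [_ [f [hf ->]]] ha hb; exists (f a b); split; first exact: hf.
by move=> y hy; exact: (hy (a,b) (conj ha hb)).
Qed.
Arguments Umn_sub [m n W a b].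

Lemma Umn_of m n Y : Y !=set0 ->
  (forall a b, (a <= m)%N -> (b <= n)%N -> exists E, fam a b E /\ Y `<=` E) ->
  exists E, Umn T PU m n E /\ Y `<=` E.
Proof.
move=> [y hy] h.
have hc : forall ab : nat * nat, exists E,
    ((ab.1 <= m)%N /\ (ab.2 <= n)%N) -> fam ab.1 ab.2 E /\ Y `<=` E.
  move=> [a b] /=; case: (pselect ((a <= m)%N /\ (b <= n)%N)) => [[ha hb]|hn].
  - by have [E hE] := h a b ha hb; exists E.
  - by exists set0.
have [f hf] := boolp.choice hc.
pose g a b := f (a, b).
exists (\bigcap_(ab in [set ab : nat * nat | (ab.1 <= m)%N /\ (ab.2 <= n)%N]) g ab.1 ab.2).
split; first split.
- by exists y => -[a b] hab; apply: (hf (a, b) hab).2.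
- by exists g; split => // a b ha hb; exact: (hf (a, b) (conj ha hb)).1.
- by move=> z hz [a b] hab; apply: (hf (a, b) hab).2.
Qed.
Arguments Umn_of [m n Y].

Lemma Dj_Umn m n : Dj (Umn T PU m n).
Proof.
move=> A B [_ [f [hf ->]]] [_ [g [hg ->]]] [z [zA zB]].
have e : forall a b, (a <= m)%N -> (b <= n)%N -> f a b = g a b.
  move=> a b ha hb; apply: (Dj_fam a b); [exact: hf|exact: hg|].
  by exists z; split; [exact: (zA (a,b) (conj ha hb))|exact: (zB (a,b) (conj ha hb))].
apply/seteqP; split => y hy [a b] [ha hb] /=.
- by rewrite -e //; exact: (hy (a,b) (conj ha hb)).
- by rewrite e //; exact: (hy (a,b) (conj ha hb)).
Qed.

Lemma Umn_mono m n m' n' W : Umn T PU m' n' W -> (m <= m')%N -> (n <= n')%N ->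
  exists V, Umn T PU m n V /\ W `<=` V.
Proof.
move=> hW hm hn; apply: Umn_of; first exact: hW.1.
by move=> a b ha hb; exact: Umn_sub hW (leq_trans ha hm) (leq_trans hb hn).
Qed.
Arguments Umn_mono [m n m' n' W].

Lemma Umn_shift m n W : Umn T PU m.+1 n W -> exists V, Umn T PU m n V /\ T @` W `<=` V.
Proof.
move=> hW; apply: Umn_of.
  by have [[w hw] _] := hW; exists (T w), w.
move=> a b ha hb.
have [E [hE hWE]] := Umn_sub hW (ha : (a.+1 <= m.+1)%N) hb.
have [U [Oc [hU [V [P [hV hP eO _]]] hOU eE]]] := hE.
exists V; split => //.
move=> _ [w hw <-]; have := hWE w hw; rewrite eE => -[_ hO].
by rewrite /= eO in hO; case: hO.
Qed.
Arguments Umn_shift [m n W].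

Lemma Tpart_in P U : Tpart T PU PU P -> PU U ->
  (exists w, closure U w /\ P (T w)) -> P `<=` T @` U.
Proof.
move=> [_ [g [hg ->]]] hU [w [hw hPw]] y hy.
have [_ [[W0 [_ eg]]|eg]] := hg U hU.
- by have := hy U hU; rewrite eg => -[a [aU _] <-]; exists a.
- by exfalso; have := hPw U hU; rewrite eg; apply; exists w.
Qed.
Arguments Tpart_in [P U].

Lemma Umn_pull m n U Y V : PU U -> Y `<=` closure U -> Y !=set0 ->
  T @` Y `<=` V -> Umn T PU m n.+1 V -> exists E, Umn T PU m n E /\ Y `<=` E.
Proof.
move=> hU hY [y hy] hTY hV; apply: Umn_of; first by exists y.
have hTy : V (T y) by apply: hTY; exists y.
have [P [hP hVP]] := Umn_sub hV (leq0n m) (isT : (1 <= n.+1)%N).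
have hPU : P `<=` T @` U.
  by apply: Tpart_in => //; exists y; split; [exact: hY | apply: hVP].
move=> [|a] b ha hb.
- have [E [hE hVE]] := Umn_sub hV (leq0n m) (hb : (b.+1 <= n.+1)%N).
  have [_ [g [hg eE]]] := hE.
  have [_ [[W0 [hW0 eg]]|eg]] := hg U hU.
  + exists W0; split => // z hz.
    have : E (T z) by apply: hVE; apply: hTY; exists z.
    rewrite eE => /(_ U hU); rewrite eg => -[c [cU cW0] ec].
    have -> // : z = c.
    by apply: (injU hU); [exact: hY | exact: subset_closure | rewrite ec].
  + exfalso; have : E (T y) by apply: hVE.
    by rewrite eE => /(_ U hU); rewrite eg; apply; exists y => //; exact: hY.
- have [E [hE hVE]] := Umn_sub hV (ltnW ha) (leqW hb).
  exists (closure U `&` T @^-1` (E `&` P)); split.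
  + exists U, (E `&` P); split => //.
    * exists E, P; split => //; exists (T y); split; [exact: hVE | exact: hVP].
    * by move=> z [_ /hPU].
  + move=> z hz; split; first exact: hY.
    have hTz : V (T z) by apply: hTY; exists z.
    by split; [exact: hVE | exact: hVP].
Qed.
Arguments Umn_pull [m n U Y V].

Lemma Tbar_spec F m n : Umn T PU m.+1 n (F (m.+1, n)) ->
  Umn T PU m n (Tbar T PU F (m, n)) /\ T @` F (m.+1, n) `<=` Tbar T PU F (m, n).
Proof.
move=> h.
exact: (epsilon_spec (inhabits set0)
  (fun V => Umn T PU m n V /\ T @` F (m.+1, n) `<=` V) (Umn_shift h)).
Qed.
Arguments Tbar_spec [F m n].

Lemma TbarE F m n V : Umn T PU m.+1 n (F (m.+1, n)) -> Umn T PU m n V ->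
  (exists z, (T @` F (m.+1, n)) z /\ V z) -> Tbar T PU F (m, n) = V.
Proof.
move=> h hV [z [hz zV]]; have [h1 h2] := Tbar_spec h.
by apply: (Dj_Umn m n) => //; exists z; split => //; exact: h2.
Qed.
Arguments TbarE [F m n V].

Lemma closure_img A x : closure A x -> closure (T @` A) (T x).
Proof.
move=> hx B hB; have [a [aA aB]] := hx _ (hTc x _ hB).
by exists (T a); split => //; exists a.
Qed.
Arguments closure_img [A x].

Lemma Xprime_stable p : Xprime T PU p -> Xprime T PU (Tprime T PU p).
Proof.
case: p => x F [[hU hc] hcl]; split; first split.
- by move=> m n; exact: (Tbar_spec (hU m.+1 n)).1.
- move=> m n m' n' hm hn /=.
  have [s1 s2] := Tbar_spec (hU m'.+1 n'); have [t1 t2] := Tbar_spec (hU m.+1 n).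
  have [E [hE hGE]] := Umn_mono s1 hm hn.
  suff -> : Tbar T PU F (m, n) = E by [].
  apply: (Dj_Umn m n) => //.
  have [w hw] := (hU m'.+1 n').1.
  exists (T w); split.
  + by apply: t2; exists w => //; apply: (hc m.+1 n m'.+1 n') => //.
  + by apply: hGE; apply: s2; exists w.
- move=> m n /=; apply: closureS (Tbar_spec (hU m.+1 n)).2 _ _.
  exact: closure_img (hcl m.+1 n).
Qed.
Arguments Xprime_stable [p].


Definition Wset (G0 : set X) : set (X * (nat * nat -> set X)) :=
  [set q | Xprime T PU q /\ q.2 (1, 1) = G0].

Lemma W_open G0 : Xprime_open T PU (Wset G0).
Proof.
split; first by move=> q [].
move=> p [hp e]; exists setT, [:: (1, 1)]; split; [exact: openT|done|].
move=> q hq _ hs; split => //.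
by rewrite (hs (1, 1)) ?mem_head.
Qed.

Lemma W_inj G0 U0 : PU U0 -> G0 `<=` U0 -> {in Wset G0 &, injective (Tprime T PU)}.
Proof.
move=> hU0 hG0 [x1 F1] [x2 F2] /set_mem [[[hU1 hc1] hcl1] e1]
  /set_mem [[[hU2 hc2] hcl2] e2] [ex eF].
have {e1}e1 : F1 (1, 1) = G0 := e1. have {e2}e2 : F2 (1, 1) = G0 := e2.
have {hcl1}hcl1 : forall m n, closure (F1 (m, n)) x1 := hcl1.
have {hcl2}hcl2 : forall m n, closure (F2 (m, n)) x2 := hcl2.
have {hU1}hU1 : forall m n, Umn T PU m n (F1 (m, n)) := hU1.
have {hU2}hU2 : forall m n, Umn T PU m n (F2 (m, n)) := hU2.
have hx : x1 = x2.
  apply: (injU hU0) => //; apply: (closureS hG0).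
  - by rewrite -e1; exact: hcl1 1 1.
  - by rewrite -e2; exact: hcl2 1 1.
subst x2; congr (_, _); apply: funext => -[m n].
pose G := Tbar T PU F1.
pose Y := closure U0 `&` T @^-1` (G (m, n.+1)).
have sub : forall F, (forall m n, Umn T PU m n (F (m, n))) ->
    (forall m n m' n', (m <= m')%N -> (n <= n')%N -> F (m', n') `<=` F (m, n)) ->
    F (1, 1) = G0 -> Tbar T PU F = G -> F (m.+1, n.+1) `<=` Y.
  move=> F hU hc e eG z hz; split.
  - by apply: subset_closure; apply: hG0; rewrite -e; exact: (hc 1 1 m.+1 n.+1 _ _ z hz).
  - by rewrite /= -eG; apply: (Tbar_spec (hU m.+1 n.+1)).2; exists z.
have s1 := sub F1 hU1 hc1 e1 erefl; have s2 := sub F2 hU2 hc2 e2 (esym eF).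
have [w hw] := (hU1 m.+1 n.+1).1.
have [w2 hw2] := (hU2 m.+1 n.+1).1.
have hTY : T @` Y `<=` G (m, n.+1) by move=> _ [z [_ hz] <-].
have hYc : Y `<=` closure U0 by move=> z [].
have [E [hE hYE]] := Umn_pull hU0 hYc (ex_intro _ w (s1 w hw)) hTY
  (Tbar_spec (hU1 m.+1 n.+1)).1.
have eq1 : F1 (m, n) = E.
  apply: (Dj_Umn m n); [exact: hU1 m n | exact: hE |].
  exists w; split; first exact: (hc1 m n m.+1 n.+1 (leqnSn m) (leqnSn n) w hw).
  exact: hYE _ (s1 w hw).
have eq2 : F2 (m, n) = E.
  apply: (Dj_Umn m n); [exact: hU2 m n | exact: hE |].
  exists w2; split; first exact: (hc2 m n m.+1 n.+1 (leqnSn m) (leqnSn n) w2 hw2).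
  exact: hYE _ (s2 w2 hw2).
by rewrite eq1 eq2.
Qed.

Lemma W_cont G0 O : Xprime_open T PU O ->
  Xprime_open T PU (Wset G0 `&` Tprime T PU @^-1` O).
Proof.
move=> [hOX hO]; split; first by move=> q [[]].
move=> [x F] [hW hq]; have [Q1 [s [oO1 hO1 hs]]] := hO _ hq.
exists (T @^-1` Q1), ((1, 1) :: map (fun i => (i.1.+1, i.2)) s); split.
- by apply: open_comp => // z _; exact: hTc.
- exact: hO1.
- move=> [y G] hq' hy hs'.
  have eG11 : G (1, 1) = F (1, 1) := hs' (1, 1) (mem_head _ _).
  split; first by split => //; rewrite /= eG11; exact: hW.2.
  apply: hs; first exact: Xprime_stable hq'.
    exact: hy.
  move=> [m n] hi /=.
  have e : G (m.+1, n) = F (m.+1, n).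
    apply: (hs' (m.+1, n)).
    by rewrite in_cons (map_f (fun i => (i.1.+1, i.2)) hi) orbT.
  by rewrite /Tbar /= e.
Qed.

Hypothesis hopen : forall U, PU U -> forall O, open O -> exists Q',
  open Q' /\ T @` (closure U `&` O) = T @` closure U `&` Q'.
Hypothesis hclosed : forall U, PU U -> closed (T @` closure U).

Lemma W_openmap G0 U0 O : PU U0 -> G0 `<=` U0 -> Xprime_open T PU O ->
  O `<=` Wset G0 -> Xprime_open T PU (Tprime T PU @` O).
Proof.
move=> hU0 hG0 [hOX hO] hOW; split.
  by move=> _ [p hp <-]; exact: Xprime_stable (hOX _ hp).
move=> _ [[x F] hp <-].
have [[[hU hc] hcl] e11] := hOW _ hp.
have {e11}e11 : F (1, 1) = G0 := e11.
have {hcl}hcl : forall m n, closure (F (m, n)) x := hcl.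
have {hU}hU : forall m n, Umn T PU m n (F (m, n)) := hU.
have [Q1 [s [oO1 hxO1 hs]]] := hO _ hp.
have [Q' [oQ' eQ']] := hopen _ hU0 _ oO1.
pose G := Tbar T PU F.
have hx0 : closure U0 x by apply: (closureS hG0); rewrite -e11; exact: hcl 1 1.
have [g01 g01s] := Tbar_spec (hU 1 1).
have [P [hP hGP]] := Umn_sub g01 (leq0n 0) (leqnn 1).
have [w hw] := (hU 1 1).1.
have hPU : P `<=` T @` U0.
  apply: Tpart_in hP hU0 _; exists w; split.
  - by apply: subset_closure; apply: hG0; rewrite -e11.
  - by apply: hGP; apply: g01s; exists w.
have hG01 : G (0, 1) `<=` T @` U0 := fun z hz => hPU z (hGP z hz).
exists Q', ((0, 1) :: map (fun i => (i.1, i.2.+1)) ((1, 1) :: s)); split => //.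
  have : (T @` closure U0 `&` Q') (T x) by rewrite -eQ'; exists x.
  by case.
move=> [y H] hq hy hag.
have [[hHU hHc] hHcl] := hq.
have {hHcl}hHcl : forall m n, closure (H (m, n)) y := hHcl.
have {hHU}hHU : forall m n, Umn T PU m n (H (m, n)) := hHU.
have eH01 : H (0, 1) = G (0, 1) := hag _ (mem_head _ _).
have hag2 : forall i, i \in (1, 1) :: s -> H (i.1, i.2.+1) = G (i.1, i.2.+1).
  move=> i hi; apply: hag.
  by rewrite in_cons (map_f (fun i => (i.1, i.2.+1)) hi) orbT.
have hHsub : forall m n, H (m, n.+1) `<=` T @` U0.
  move=> m n z hz; apply: hG01; rewrite -eH01.
  exact: (hHc 0 1 m n.+1 (leq0n m) (ltn0Sn n) z hz).
have hTC : T @` U0 `<=` T @` closure U0 := image_subset T (@subset_closure _ U0).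
have hy0 : (T @` closure U0) y.
  apply: (hclosed _ hU0); apply: (closureS _ (hHcl 0 1)).
  by move=> z hz; apply: hTC; apply: hG01; rewrite -eH01.
have [x'' hx'' ex''] : (T @` (closure U0 `&` Q1)) y by rewrite eQ'; split.
pose Y m n := closure U0 `&` T @^-1` (H (m, n.+1)).
have hYne : forall m n, Y m n !=set0.
  move=> m n; have [z hz] := (hHU m n.+1).1; have [a aU ea] := hHsub m n z hz.
  by exists a; split; [exact: subset_closure | rewrite /= ea].
have hYE : forall m n, exists E, Umn T PU m n E /\ Y m n `<=` E.
  move=> m n; apply: (Umn_pull hU0 _ (hYne m n) _ (hHU m n.+1)).
  - by move=> z [].
  - by move=> _ [z [_ hz] <-].
pose F'' := fun mn : nat * nat => epsilon (inhabits set0)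
  (fun E => Umn T PU mn.1 mn.2 E /\ Y mn.1 mn.2 `<=` E).
have hF'' : forall m n, Umn T PU m n (F'' (m, n)) /\ Y m n `<=` F'' (m, n).
  move=> m n; exact: (epsilon_spec (inhabits set0)
    (fun E => Umn T PU m n E /\ Y m n `<=` E) (hYE m n)).
have hcl'' : forall m n, closure (Y m n) x''.
  move=> m n B; rewrite nbhsE => -[N [oN Nx] NB].
  have [N' [oN' eN']] := hopen _ hU0 _ oN.
  have hyN' : N' y.
    have : (T @` closure U0 `&` N') y.
      by rewrite -eN' -ex''; exists x'' => //; split => //; case: hx''.
    by case.
  have [z [zH zN']] := hHcl m n.+1 N' (open_nbhs_nbhs (conj oN' hyN')).
  have : (T @` closure U0 `&` N') z := conj (hTC _ (hHsub m n z zH)) zN'.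
  rewrite -eN' => -[a [aU aN] ea].
  by exists a; split; [split => //; rewrite /= ea | exact: NB].
have agree : forall m n, (m, n) \in (1, 1) :: s -> F'' (m, n) = F (m, n).
  move=> m n hi; have eH := hag2 _ hi; simpl in eH.
  have [z hz] := (hU m.+1 n.+1).1.
  have zY : Y m n z.
    split.
    - by apply: subset_closure; apply: hG0; rewrite -e11; exact: (hc 1 1 m.+1 n.+1 _ _ z hz).
    - by rewrite /= eH; apply: (Tbar_spec (hU m.+1 n.+1)).2; exists z.
  apply: (Dj_Umn m n); [exact: (hF'' m n).1 | exact: hU m n |].
  exists z; split; first exact: (hF'' m n).2 z zY.
  exact: (hc m n m.+1 n.+1 (leqnSn m) (leqnSn n) z hz).
have hX'' : Xprime T PU (x'', F'').
  split; first split.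
  - by move=> m n; exact: (hF'' m n).1.
  - move=> m n m' n' hm hn /=.
    have [E [hE hsub]] := Umn_mono (hF'' m' n').1 hm hn.
    suff -> : F'' (m, n) = E by [].
    apply: (Dj_Umn m n); [exact: (hF'' m n).1 | exact: hE |].
    have [z hz] := hYne m' n'; exists z; split.
    + apply: (hF'' m n).2; split; first by case: hz.
      by case: hz => _ hz; exact: (hHc m n.+1 m' n'.+1 hm hn).
    + exact: hsub z ((hF'' m' n').2 z hz).
  - by move=> m n /=; exact: closureS (hF'' m n).2 _ (hcl'' m n).
have hO'' : O (x'', F'').
  apply: hs hX'' _ _; first by case: hx''.
  by move=> [m n] hi /=; apply: agree; rewrite in_cons hi orbT.
exists (x'', F'') => //; rewrite /Tprime /=; congr (_, _) => //.
apply: funext => -[m n]; apply: TbarE.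
- exact: (hF'' m.+1 n).1.
- exact: hHU m n.
- have [z hz] := (hHU m.+1 n.+1).1; have [a aU ea] := hHsub m.+1 n z hz.
  exists z; split.
  + exists a => //; apply: (hF'' m.+1 n).2; split; first exact: subset_closure.
    by rewrite /= ea.
  + exact: (hHc m n m.+1 n.+1 (leqnSn m) (leqnSn n) z hz).
Qed.

End Main.

Theorem proposition5p5 (X : topologicalType) (T : X -> X) (PU : set (set X)) :
  compact [set: X] -> hausdorff_space X ->
  piecewise_invertible T PU ->
  local_homeomorphism (Xprime T PU) (Xprime_open T PU) (Tprime T PU).
Proof.
move=> hcomp hhaus [hTc [_ _ hPd _] hpw].
have hinj : forall U, PU U -> {in closure U &, injective T}.
  by move=> U hU; have [] := hpw U hU.
have hopen : forall U, PU U -> forall O, open O -> exists O',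
    open O' /\ T @` (closure U `&` O) = T @` closure U `&` O'.
  by move=> U hU; have [] := hpw U hU.
have hclosed : forall U, PU U -> closed (T @` closure U).
  move=> U hU; apply: compact_closed hhaus _.
  apply: continuous_compact; first exact: continuous_subspaceT.
  by apply: (subclosed_compact _ hcomp) => //; exact: closed_closure.
split; first by move=> p hp; exact: (@Xprime_stable X T PU hTc hPd hinj p hp).
move=> [x F] hp.
have [[hU _] _] := hp.
have [U0 [hU0 hG0]] := @Umn_sub X T PU 1 1 (F (1, 1)) 0 0 (hU 1 1) (leq0n 1) (leq0n 1).
exists (Wset X T PU (F (1, 1))); split; first split.
- exact: W_open.
- by split.
- apply: (@W_openmap X T PU hTc hPd hinj hopen hclosed (F (1, 1)) U0 _ hU0 hG0) => //.
  exact: W_open.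
- exact: (@W_inj X T PU hPd hinj (F (1, 1)) U0 hU0 hG0).
split.
- move=> O hO; exact: (@W_cont X T PU hTc hPd hinj (F (1, 1)) O hO).
- move=> O hO hOW.
  exact: (@W_openmap X T PU hTc hPd hinj hopen hclosed (F (1, 1)) U0 O hU0 hG0 hO hOW).
Qed.
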